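(* Let $\Sigma$ be an oriented graph with $\det W(\Sigma)\neq 0$. Then there exists a unique regular rational orthogonal matrix $Q_0\in\mathcal{Q}(\Sigma)$ such that $Q_0^{\rm T}S(\Sigma)Q_0=S(\Sigma^{\rm T})$. Moreover, if $\Sigma$ is not isomorphic to $\Sigma^{\rm T}$, then $Q_0$ is not a permutation matrix.
   Context: An oriented graph on vertices $v_1,\dots,v_n$ is a simple graph with each edge directed. Its skew-adjacency matrix $S(\Sigma)=(s_{ij})$ has $s_{ij}=1$ if $(v_i,v_j)$ is an arc, $-1$ if $(v_j,v_i)$ is an arc, $0$ otherwise. The converse $\Sigma^{\rm T}$ reverses every arc, so $S(\Sigma^{\rm T})=-S(\Sigma)$. Two oriented graphs are isomorphic if their skew-adjacency matrices are conjugate by a permutation matrix; they are generalized cospectral if their skew-adjacency matrices $S$ have the same spectrum and the matrices $J-I-S$ have the same spectrum. With $e$ the all-one vector, $W(\Sigma)=[e,Se,\dots,S^{n-1}e]$, $S=S(\Sigma)$. A rational orthogonal matrix $Q$ is regular if $Qe=e$. $\mathcal{Q}(\Sigma)$ is the set of regular rational orthogonal $Q$ with $Q^{\rm T}S(\Sigma)Q=S(\Delta)$ for some oriented graph $\Delta$ generalized cospectral with $\Sigma$. *)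

(* Defs.v *)
From HB Require Import structures.
From mathcomp Require Import all_boot all_order all_algebra.
Set Implicit Arguments. Unset Strict Implicit. Unset Printing Implicit Defensive.
Import GRing.Theory.
Local Open Scope ring_scope.

Record ograph (n : nat) := OGraph {
  arc : rel 'I_n;
  arc_irr : irreflexive arc;
  arc_asym : forall i j, arc i j -> ~~ arc j i }.

Definition skew_adj n (G : ograph n) : 'M[rat]_n :=
  \matrix_(i, j) (if arc G i j then 1 else if arc G j i then -1 else 0).

Lemma conv_irr n (G : ograph n) : irreflexive (fun i j => arc G j i).
Proof. by move=> i; apply: arc_irr. Qed.

Lemma conv_asym n (G : ograph n) (i j : 'I_n) :
  arc G j i -> ~~ arc G i j.
Proof. exact: arc_asym. Qed.

Definition converse n (G : ograph n) : ograph n :=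
  @OGraph n (fun i j => arc G j i) (@conv_irr n G) (@conv_asym n G).

Definition onev n : 'cV[rat]_n := const_mx 1.
Definition Jmx n : 'M[rat]_n := const_mx 1.

Definition ograph_iso n (G D : ograph n) : Prop :=
  exists P : 'M[rat]_n, is_perm_mx P /\ P^T *m skew_adj G *m P = skew_adj D.

(* generalized cospectrality: S and J - I - S have the same spectra
   (spectrum with multiplicities = characteristic polynomial) *)
Definition gen_cospectral n (G D : ograph n) : Prop :=
  char_poly (skew_adj G) = char_poly (skew_adj D) /\
  char_poly (Jmx n - 1%:M - skew_adj G) = char_poly (Jmx n - 1%:M - skew_adj D).

Definition walk_mx n (G : ograph n) : 'M[rat]_n :=
  \matrix_(i, j) ((skew_adj G ^+ j *m onev n) i 0).

Definition reg_orth n (Q : 'M[rat]_n) : Prop :=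
  Q^T *m Q = 1%:M /\ Q *m onev n = onev n.

Definition Qset n (G : ograph n) (Q : 'M[rat]_n) : Prop :=
  reg_orth Q /\
  exists D : ograph n, gen_cospectral G D /\ Q^T *m skew_adj G *m Q = skew_adj D.

(* Main.v *)
Require Import Defs.
From HB Require Import structures.
From mathcomp Require Import all_boot all_order all_algebra.
From mathcomp Require Import lra.
Import GRing.Theory.
Local Open Scope ring_scope.

Lemma char_poly_tr n (A : 'M[rat]_n) : char_poly A^T = char_poly A.
Proof.
rewrite /char_poly -det_tr; congr (\det _).
apply/matrixP => i j; rewrite !mxE eq_sym //.
Qed.

Lemma skew_conv n (G : ograph n) : skew_adj (converse G) = (skew_adj G)^T.
Proof. by apply/matrixP => i j; rewrite !mxE. Qed.

Lemma skew_tr n (G : ograph n) : (skew_adj G)^T = - skew_adj G.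
Proof.
apply/matrixP => i j; rewrite !mxE.
case: (boolP (Defs.arc G i j)) => h.
  by rewrite (negbTE (arc_asym h)).
by case: (Defs.arc G j i); rewrite ?opprK ?oppr0.
Qed.

Lemma trX n (A : 'M[rat]_n) k : (A ^+ k)^T = (A^T) ^+ k.
Proof.
elim: k => [|k IH]; first by rewrite !expr0 tr_scalar_mx.
by rewrite exprS exprSr -!mulmxE trmx_mul IH.
Qed.

Lemma powN n (A : 'M[rat]_n) k : (- A) ^+ k = ((-1) ^+ k : rat) *: A ^+ k.
Proof.
elim: k => [|k IH]; first by rewrite !expr0 scale1r.
by rewrite !exprS IH -!mulmxE scalemxAr -scalerA scaleN1r mulNmx mulmxN.
Qed.

Definition walkm {n} (A : 'M[rat]_n) : 'M[rat]_n :=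
  \matrix_(i, j) ((A ^+ j *m onev n) i 0).

Lemma mul_walkm n (M A : 'M[rat]_n) i j :
  (M *m walkm A) i j = (M *m (A ^+ j *m onev n)) i 0.
Proof. by rewrite !mxE; apply: eq_bigr => k _; rewrite mxE. Qed.

Lemma trwalk_mul n (A : 'M[rat]_n) (v : 'cV[rat]_n) i :
  ((walkm A)^T *m v) i 0 = ((A ^+ i *m onev n)^T *m v) 0 0.
Proof. by rewrite !mxE; apply: eq_bigr => k _; rewrite !mxE. Qed.

Lemma walkm_entry n (A X : 'M[rat]_n) i j :
  ((walkm A)^T *m X *m walkm A) i j =
  ((onev n)^T *m ((A^T) ^+ i *m X *m A ^+ j) *m onev n) 0 0.
Proof.
by rewrite mul_walkm -mulmxA trwalk_mul trmx_mul trX !mulmxA.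
Qed.

Section Main.
Variables (n : nat) (S : 'M[rat]_n).
Hypothesis skS : S^T = - S.
Local Notation e := (onev n).
Definition gg k := (e^T *m S ^+ k *m e) 0 0.

Lemma gg_odd k : odd k -> gg k = 0.
Proof.
move=> hk.
have : gg k = (-1) ^+ k * gg k.
  have h1 : gg k = ((e^T *m S ^+ k *m e)^T) 0 0 by rewrite mxE.
  rewrite {1}h1 !trmx_mul trmxK trX skS powN.
  by rewrite -scalemxAl -scalemxAr mxE /gg mulmxA.
rewrite -signr_odd hk expr1 mulN1r => h; lra.
Qed.

Lemma scal_entry c (P : 'M[rat]_n) :
  (e^T *m (c *: P) *m e) 0 0 = c * (e^T *m P *m e) 0 0.
Proof. by rewrite -scalemxAr -scalemxAl mxE. Qed.

Lemma E1 m i j : ((walkm S)^T *m S ^+ m *m walkm S) i j = (-1) ^+ i * gg (i + m + j).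
Proof.
rewrite walkm_entry skS powN -!scalemxAl. rewrite -(scalemxAr _ (onev n)^T) -scalemxAl mxE !mulmxE -!exprD //.
Qed.

Lemma E2 m i j : ((walkm (- S))^T *m S ^+ m *m walkm (- S)) i j = (-1) ^+ j * gg (i + m + j).
Proof.
rewrite walkm_entry linearN /= skS opprK powN -(scalemxAr _ (S ^+ i *m S ^+ m)) -(scalemxAr _ (onev n)^T) -scalemxAl mxE !mulmxE -!exprD //.
Qed.

Lemma par m i j : (-1) ^+ j * gg (i + m + j) = (-1) ^+ m * ((-1) ^+ i * gg (i + m + j)).
Proof.
case: (boolP (odd (i + m + j))) => h; first by rewrite gg_odd // !mulr0.
rewrite mulrA -exprD; congr (_ * _).
rewrite -signr_odd -(signr_odd _ (m + i)); congr (_ ^+ _).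
by move: h; rewrite !oddD; case: (odd i); case: (odd j); case: (odd m).
Qed.

Lemma orthW : (walkm (- S))^T *m walkm (- S) = (walkm S)^T *m walkm S.
Proof.
apply/matrixP => i j.
have := E1 0 i j; have := E2 0 i j; rewrite expr0 !mulmx1 => -> ->.
by rewrite (par 0) expr0 mul1r.
Qed.

Lemma skewW : (walkm (- S))^T *m S *m walkm (- S) = - ((walkm S)^T *m S *m walkm S).
Proof.
apply/matrixP => i j.
rewrite [RHS]mxE; have := E1 1 i j; have := E2 1 i j; rewrite expr1 => -> ->.
by rewrite (par 1) expr1 mulN1r.
Qed.

End Main.

Lemma walk_e n : exists d : 'cV[rat]_n, forall A : 'M[rat]_n, walkm A *m d = onev n.
Proof.
case: n => [|k]; first by exists 0 => A; rewrite [LHS]flatmx0 [RHS]flatmx0.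
exists (delta_mx 0 0) => A; rewrite -colE; apply/matrixP => i j.
rewrite (ord1 j) mxE /walkm mxE expr0 mul1mx //.
Qed.

Theorem proposition2p5 (n : nat) (G : ograph n) :
  \det (walk_mx G) != 0 ->
  (exists! Q0 : 'M[rat]_n,
      Qset G Q0 /\ Q0^T *m skew_adj G *m Q0 = skew_adj (converse G)) /\
  (forall Q0 : 'M[rat]_n,
      Qset G Q0 -> Q0^T *m skew_adj G *m Q0 = skew_adj (converse G) ->
      ~ ograph_iso G (converse G) -> ~~ is_perm_mx Q0).
Proof.
move=> hdet.
have skS : (skew_adj G)^T = - skew_adj G := @skew_tr n G.
have hconv : skew_adj (converse G) = - skew_adj G by rewrite skew_conv skS.
have hW : walk_mx G = walkm (skew_adj G) by [].
have hW' : walk_mx (converse G) = walkm (- skew_adj G) by rewrite /walk_mx hconv.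
rewrite hW in hdet.
set S := skew_adj G in skS hconv hW hW' hdet *.
set W := walkm S in hdet *.
set W' := walkm (- S).
have Wu : W \in unitmx by rewrite unitmxE unitfE.
set Q0 := W' *m invmx W.
have uniqQ : forall Q, Qset G Q -> Q^T *m S *m Q = skew_adj (converse G) -> Q^T = Q0.
  move=> Q [[orth reg] _]; rewrite hconv => hS.
  have QQt : Q *m Q^T = 1%:M := mulmx1C orth.
  have Qte : Q^T *m onev n = onev n by rewrite -{1}reg mulmxA orth mul1mx.
  have comm : Q^T *m S = - S *m Q^T.
    by rewrite -[Q^T *m S]mulmx1 -QQt !mulmxA hS.
  have commk : forall k, Q^T *m S ^+ k = (- S) ^+ k *m Q^T.
    elim=> [|k IH]; first by rewrite !expr0 !mulmxE mulr1 mul1r.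
    rewrite !exprS -!mulmxE mulmxA comm -!mulmxA IH //.
  have hQW : Q^T *m W = W'.
    apply/matrixP => i j; rewrite mul_walkm mulmxA commk -mulmxA Qte /W' /walkm mxE //.
  by rewrite -[Q^T]mulmx1 -(mulmxV Wu) mulmxA hQW.
have orthQ : Q0^T *m Q0 = 1%:M.
  rewrite /Q0 trmx_mul -mulmxA (mulmxA W'^T) (@orthW n S skS).
  rewrite -(mulmxA W^T) mulmxA -trmx_mul (mulmxV Wu) tr_scalar_mx mul1mx //.
have skQ : Q0^T *m S *m Q0 = skew_adj (converse G).
  rewrite hconv /Q0 trmx_mul -!mulmxA (mulmxA W'^T) (mulmxA (W'^T *m S)) (@skewW n S skS).
  rewrite mulNmx mulmxN; congr (- _).
  rewrite !mulmxA -trmx_mul (mulmxV Wu) tr_scalar_mx mul1mx -mulmxA (mulmxV Wu) mulmx1 //.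
have regQ : Q0 *m onev n = onev n.
  have [d hd] := walk_e n.
  by rewrite -[in LHS](hd S) /Q0 -mulmxA (mulmxA (invmx W)) (mulVmx Wu) mul1mx hd.
have cosp : gen_cospectral G (converse G).
  rewrite /gen_cospectral skew_conv char_poly_tr; split => //.
  rewrite -char_poly_tr !linearB /= /Jmx trmx_const tr_scalar_mx //.
have PQ : Qset G Q0 by split => //; exists (converse G).
split.
  exists Q0; split => // y [hy1 hy2].
  by apply: trmx_inj; rewrite (uniqQ y hy1 hy2) (uniqQ Q0 PQ skQ).
move=> Q _ hS hni; apply/negP => hP; apply: hni; exists Q; split => //.
Qed.
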